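(* Let $T$ be a power bounded operator. Then $T\overset{d}{\prec} S$ if and only if the isometric asymptote of $T$ is not unitary.
   Context: $S$ denotes the simple unilateral shift, i.e. multiplication by the independent variable on the Hardy space $H^2$. For operators $T\in\mathcal L(\mathcal H)$, $R\in\mathcal L(\mathcal K)$, the notation $T\overset{d}{\prec} R$ means that there exists a transformation $X\in\mathcal L(\mathcal H,\mathcal K)$ with dense range such that $XT=RX$. An operator $T$ is power bounded if $\sup_{n\ge0}\|T^n\|<\infty$. For a power bounded operator $T$, the isometric asymptote $(X_{T,+},V)$ (in the sense of Kérchy) consists of an isometry $V$ and a canonical intertwining mapping $X_{T,+}$ realizing $T\overset{d}{\prec} V$, with the universality property that every intertwining of $T$ with an isometry factors through $X_{T,+}$; the isometry $V$ itself is also called the isometric asymptote of $T$. *)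

(* Defs.v *)
From mathcomp Require Import all_boot all_algebra.
From mathcomp Require Import reals complex.
Set Implicit Arguments. Unset Strict Implicit. Unset Printing Implicit Defensive.
Import GRing.Theory Num.Theory.
Local Open Scope ring_scope.
Local Open Scope complex_scope.

Record HilbertSpace (R : realType) := {
  hcarrier :> lmodType R[i];
  inner : hcarrier -> hcarrier -> R[i];
  inner_linear : forall (a : R[i]) (x y z : hcarrier),
      inner (a *: x + y) z = a * inner x z + inner y z;
  inner_conj : forall x y : hcarrier, inner x y = (inner y x)^*;
  inner_ge0 : forall x : hcarrier, 0 <= inner x x;
  inner_eq0 : forall x : hcarrier, inner x x = 0 -> x = 0;
  inner_complete : forall u : nat -> hcarrier,
      (forall eps : R, 0 < eps -> exists N : nat, forall m n : nat,
          (N <= m)%N -> (N <= n)%N ->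
          Num.sqrt (complex.Re (inner (u m - u n) (u m - u n))) < eps) ->
      exists x : hcarrier, forall eps : R, 0 < eps -> exists N : nat,
          forall n : nat, (N <= n)%N ->
          Num.sqrt (complex.Re (inner (u n - x) (u n - x))) < eps
}.

Section Ops.
Variable R : realType.

Definition hnorm (H : HilbertSpace R) (x : H) : R :=
  Num.sqrt (complex.Re (inner x x)).

Definition is_op (H K : HilbertSpace R) (X : H -> K) : Prop :=
  (forall (a : R[i]) (x y : H), X (a *: x + y) = a *: X x + X y) /\
  exists M : R, forall x : H, hnorm (X x) <= M * hnorm x.

Definition power_bounded (H : HilbertSpace R) (T : H -> H) : Prop :=
  is_op T /\ exists M : R, forall (n : nat) (x : H),
    hnorm (iter n T x) <= M * hnorm x.

Definition dense_range (H K : HilbertSpace R) (X : H -> K) : Prop :=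
  forall (y : K) (eps : R), 0 < eps -> exists x : H, hnorm (X x - y) < eps.

Definition intertwines (H K : HilbertSpace R) (X : H -> K)
    (T : H -> H) (Q : K -> K) : Prop :=
  forall x : H, X (T x) = Q (X x).

Definition dprec (H K : HilbertSpace R) (T : H -> H) (Q : K -> K) : Prop :=
  exists X : H -> K, is_op X /\ dense_range X /\ intertwines X T Q.

Definition isometry (H : HilbertSpace R) (V : H -> H) : Prop :=
  is_op V /\ forall x : H, hnorm (V x) = hnorm x.

Definition unitary (H : HilbertSpace R) (V : H -> H) : Prop :=
  isometry V /\ forall y : H, exists x : H, V x = y.

(* These are exactly the operators unitarily equivalent to multiplication
   by the variable on H^2. *)
Definition simple_unilateral_shift (L : HilbertSpace R) (S : L -> L) : Prop :=
  isometry S /\ exists e : L, hnorm e = 1 /\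
    (forall m n : nat, m <> n -> inner (iter m S e) (iter n S e) = 0) /\
    (forall (y : L) (eps : R), 0 < eps -> exists (n : nat) (c : 'I_n -> R[i]),
        hnorm ((\sum_(i < n) c i *: iter i S e) - y) < eps).

Definition isometric_asymptote (H K : HilbertSpace R) (T : H -> H)
    (X : H -> K) (V : K -> K) : Prop :=
  isometry V /\ is_op X /\ dense_range X /\ intertwines X T V /\
  forall (K' : HilbertSpace R) (W : K' -> K') (Y : H -> K'),
    isometry W -> is_op Y -> intertwines Y T W ->
    exists Z : K -> K', is_op Z /\ intertwines Z V W /\
      forall x : H, Y x = Z (X x).

End Ops.

(* Main.v *)
Require Import Defs.
From mathcomp Require Import all_boot all_order all_algebra.
From mathcomp Require Import reals complex classical_sets.
From mathcomp Require Import ring lra.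
From Stdlib Require Import ClassicalEpsilon FunctionalExtensionality Classical.
Set Implicit Arguments. Unset Strict Implicit. Unset Printing Implicit Defensive.
Import Order.TTheory GRing.Theory Num.Theory.
Local Open Scope ring_scope.
Local Open Scope complex_scope.

Section Basic.
Variable R : realType.
Variable H : HilbertSpace R.
Implicit Types (x y z : H) (a b : R[i]).

Lemma ip0l z : inner (0 : H) z = 0.
Proof.
have := inner_linear 1 (0:H) 0 z; rewrite scale1r addr0 mul1r => h.
by apply: (addrI (inner (0:H) z)); rewrite addr0 -h.
Qed.

Lemma ipDl x y z : inner (x + y) z = inner x z + inner y z.
Proof. by have := inner_linear 1 x y z; rewrite scale1r mul1r. Qed.

Lemma ipZl a x z : inner (a *: x) z = a * inner x z.
Proof. by have := inner_linear a x 0 z; rewrite addr0 ip0l addr0. Qed.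

Lemma ipNl x z : inner (- x) z = - inner x z.
Proof. by rewrite -scaleN1r ipZl mulN1r. Qed.

Lemma ipBl x y z : inner (x - y) z = inner x z - inner y z.
Proof. by rewrite ipDl ipNl. Qed.

Lemma ipDr x y z : inner z (x + y) = inner z x + inner z y.
Proof. by rewrite inner_conj ipDl rmorphD (inner_conj z x) (inner_conj z y). Qed.

Lemma ipZr a x z : inner z (a *: x) = a^* * inner z x.
Proof. by rewrite inner_conj ipZl rmorphM (inner_conj z x). Qed.

Lemma ip0r z : inner z (0 : H) = 0.
Proof. by rewrite inner_conj ip0l conjc0. Qed.

Lemma ipNr x z : inner z (- x) = - inner z x.
Proof. by rewrite inner_conj ipNl rmorphN (inner_conj z x). Qed.

Lemma ipBr x y z : inner z (x - y) = inner z x - inner z y.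
Proof. by rewrite ipDr ipNr. Qed.

Lemma ip_suml I (r : seq I) (P : pred I) (F : I -> H) z :
  inner (\sum_(i <- r | P i) F i) z = \sum_(i <- r | P i) inner (F i) z.
Proof.
elim/big_rec2: _ => [|i y1 y2 _ <-]; first by rewrite ip0l.
by rewrite ipDl.
Qed.

Lemma ip_sumr I (r : seq I) (P : pred I) (F : I -> H) z :
  inner z (\sum_(i <- r | P i) F i) = \sum_(i <- r | P i) inner z (F i).
Proof.
elim/big_rec2: _ => [|i y1 y2 _ <-]; first by rewrite ip0r.
by rewrite ipDr.
Qed.

Definition nsq x : R := complex.Re (inner x x).

Lemma ipxx x : inner x x = (nsq x)%:C.
Proof.
have := inner_ge0 x; rewrite /nsq; case: (inner x x) => a b.
by rewrite lecE /= => /andP[/eqP -> _].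
Qed.

Lemma nsq_ge0 x : 0 <= nsq x.
Proof. by have := inner_ge0 x; rewrite ipxx ler0c. Qed.

Lemma hnorm_sq x : hnorm x ^+ 2 = nsq x.
Proof. by rewrite /hnorm sqr_sqrtr // nsq_ge0. Qed.

Lemma hnorm_ge0 x : 0 <= hnorm x.
Proof. exact: sqrtr_ge0. Qed.

Lemma nsq_eq0 x : nsq x = 0 -> x = 0.
Proof. by move=> h; apply: inner_eq0; rewrite ipxx h. Qed.

Lemma hnorm_eq0 x : hnorm x = 0 -> x = 0.
Proof. by move=> h; apply: nsq_eq0; rewrite -hnorm_sq h expr0n. Qed.

Lemma hnorm0 : hnorm (0 : H) = 0.
Proof. by rewrite /hnorm ip0l /= sqrtr0. Qed.

Lemma ReJ a : complex.Re (a^*) = complex.Re a.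
Proof. by case: a. Qed.

Lemma ImJ a : complex.Im (a^*) = - complex.Im a.
Proof. by case: a. Qed.

Lemma nsqD x y : nsq (x + y) = nsq x + nsq y + 2 * complex.Re (inner x y).
Proof.
rewrite /nsq ipDl !ipDr (inner_conj y x) !raddfD /= ReJ; ring.
Qed.

Lemma nsqN x : nsq (- x) = nsq x.
Proof. by rewrite /nsq ipNl ipNr opprK. Qed.

Lemma nsqB x y : nsq (x - y) = nsq x + nsq y - 2 * complex.Re (inner x y).
Proof. by rewrite nsqD nsqN ipNr raddfN /=; ring. Qed.

Lemma hnormN x : hnorm (- x) = hnorm x.
Proof. by rewrite /hnorm -/(nsq _) nsqN. Qed.

Lemma hnormB x y : hnorm (x - y) = hnorm (y - x).
Proof. by rewrite -hnormN opprB. Qed.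

Lemma nsqZr (t : R) x : nsq (t%:C *: x) = t ^+ 2 * nsq x.
Proof.
rewrite {1}/nsq ipZl ipZr ipxx /=; ring.
Qed.

End Basic.


Section Basic2.
Variable R : realType.
Variable H : HilbertSpace R.
Implicit Types (x y z : H) (a b : R[i]).

Lemma sq_le (u v : R) : 0 <= v -> u ^+ 2 <= v ^+ 2 -> u <= v.
Proof. move=> v0 h; nra. Qed.

Lemma sq_lt (u v : R) : 0 <= v -> u ^+ 2 < v ^+ 2 -> u < v.
Proof. move=> v0 h; nra. Qed.

Lemma hnorm_le x (A : R) : 0 <= A -> nsq x <= A ^+ 2 -> hnorm x <= A.
Proof. by move=> A0 h; apply: sq_le => //; rewrite hnorm_sq. Qed.

Lemma hnorm_lt x (A : R) : 0 <= A -> nsq x < A ^+ 2 -> hnorm x < A.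
Proof. by move=> A0 h; apply: sq_lt => //; rewrite hnorm_sq. Qed.

Lemma ReipZr (t : R) x y :
  complex.Re (inner x (t%:C *: y)) = t * complex.Re (inner x y).
Proof. by rewrite ipZr; case: (inner x y) => p q /=; ring. Qed.

Lemma cs_sq x y : complex.Re (inner x y) ^+ 2 <= nsq x * nsq y.
Proof.
set c := complex.Re (inner x y).
have [y0|yn0] := eqVneq (nsq y) 0.
  by rewrite /c (nsq_eq0 y0) ip0r /nsq ip0r /= expr0n /= mulr0.
have yp : 0 < nsq y by rewrite lt0r yn0 nsq_ge0.
have := nsq_ge0 (x - (c / nsq y)%:C *: y).
rewrite nsqB nsqZr ReipZr -/c => h.
have e : c ^+ 2 = (c / nsq y) ^+ 2 * nsq y * nsq y.
  by field; rewrite yn0.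
have e2 : c * c = c / nsq y * c * nsq y by field; rewrite yn0.
nra.
Qed.

Lemma cs x y : complex.Re (inner x y) <= hnorm x * hnorm y.
Proof.
apply: (le_trans (ler_norm _)).
apply: sq_le; first by rewrite mulr_ge0 // hnorm_ge0.
by rewrite real_normK ?num_real // exprMn !hnorm_sq cs_sq.
Qed.

Lemma hnormD x y : hnorm (x + y) <= hnorm x + hnorm y.
Proof.
apply: hnorm_le; first by rewrite addr_ge0 // hnorm_ge0.
rewrite nsqD -!hnorm_sq; have := cs x y; nra.
Qed.

Lemma hnorm_tri x y z : hnorm (x - z) <= hnorm (x - y) + hnorm (y - z).
Proof. by have := hnormD (x - y) (y - z); rewrite addrA subrK. Qed.

(* complex inner products determined by real parts *)
Lemma ReipZi x y : complex.Re (inner x ('i *: y)) = complex.Im (inner x y).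
Proof. by rewrite ipZr; case: (inner x y) => p q /=; ring. Qed.

Lemma complex_ext a b : complex.Re a = complex.Re b -> complex.Im a = complex.Im b -> a = b.
Proof. by case: a => ? ?; case: b => ? ? /= -> ->. Qed.

End Basic2.


Lemma le_eps (R : realType) (a b : R) : (forall eps, 0 < eps -> a <= b + eps) -> a <= b.
Proof.
move=> h; rewrite leNgt; apply/negP => ab.
have p : 0 < (a - b) / 2 by lra.
have := h _ p; lra.
Qed.

Lemma eq0_eps (R : realType) (a : R) : 0 <= a -> (forall eps, 0 < eps -> a <= eps) -> a = 0.
Proof.
move=> a0 h; apply/eqP; rewrite eq_le a0 andbT; apply: le_eps => eps /h; lra.
Qed.

Section Ops.
Variable R : realType.
Implicit Types (a : R[i]).

Section OneOp.
Variables (H K : HilbertSpace R) (X : H -> K).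
Hypothesis hX : is_op X.

Lemma opD x y : X (x + y) = X x + X y.
Proof. by have := hX.1 1 x y; rewrite !scale1r. Qed.

Lemma op0 : X 0 = 0.
Proof.
have := opD 0 0; rewrite addr0 => h.
by apply: (addrI (X 0)); rewrite addr0 -h.
Qed.

Lemma opZ a x : X (a *: x) = a *: X x.
Proof. by have := hX.1 a x 0; rewrite !addr0 op0 addr0. Qed.

Lemma opN x : X (- x) = - X x.
Proof. by rewrite -scaleN1r opZ scaleN1r. Qed.

Lemma opB x y : X (x - y) = X x - X y.
Proof. by rewrite opD opN. Qed.

Lemma op_sum I (r : seq I) (P : pred I) (F : I -> H) :
  X (\sum_(i <- r | P i) F i) = \sum_(i <- r | P i) X (F i).
Proof.
elim/big_rec2: _ => [|i y1 y2 _ <-]; first exact: op0.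
exact: opD.
Qed.

Lemma op_bound : exists M : R, 0 < M /\ forall x, hnorm (X x) <= M * hnorm x.
Proof.
case: hX => _ [M hM]; exists (`|M| + 1); split; first by rewrite ltr_pwDr // normr_ge0.
move=> x; apply: (le_trans (hM x)); apply: ler_wpM2r; first exact: hnorm_ge0.
by apply: le_trans (ler_norm M) _; rewrite lerDl.
Qed.

End OneOp.

Lemma iso_nsq (H : HilbertSpace R) (V : H -> H) x : Defs.isometry V -> nsq (V x) = nsq x.
Proof. by case=> _ h; rewrite -!hnorm_sq h. Qed.

Lemma iso_ip (H : HilbertSpace R) (V : H -> H) x y : Defs.isometry V ->
  inner (V x) (V y) = inner x y.
Proof.
move=> hV.
have re : forall x y : H, complex.Re (inner (V x) (V y)) = complex.Re (inner x y).
  move=> u v; have := iso_nsq (u + v) hV; rewrite (opD hV.1) !nsqD !(iso_nsq _ hV).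
  move=> h; apply: (mulfI (_ : (2:R) != 0)) => //; lra.
apply: complex_ext; first exact: re.
by rewrite -!ReipZi -(opZ hV.1) re.
Qed.

Lemma nsqZ (H : HilbertSpace R) a (x : H) :
  nsq (a *: x) = complex.Re (a * a^*) * nsq x.
Proof.
rewrite {1}/nsq ipZl ipZr ipxx; case: a => p q /=; ring.
Qed.

Lemma hnormZ (H : HilbertSpace R) a (x : H) :
  hnorm (a *: x) = Num.sqrt (complex.Re (a * a^*)) * hnorm x.
Proof.
rewrite /hnorm -/(nsq _) nsqZ sqrtrM //; case: a => p q /=.
rewrite -!expr2; nra.
Qed.

Definition conv (H : HilbertSpace R) (u : nat -> H) (x : H) :=
  forall eps : R, 0 < eps -> exists N : nat, forall n, (N <= n)%N -> hnorm (u n - x) < eps.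

Lemma conv_unique (H : HilbertSpace R) (u : nat -> H) x y :
  conv u x -> conv u y -> x = y.
Proof.
move=> cx cy; apply/eqP; rewrite -subr_eq0; apply/eqP; apply: hnorm_eq0.
apply: eq0_eps; first exact: hnorm_ge0.
move=> e e0; have e20 : 0 < e / 2 by rewrite divr_gt0.
case: (cx _ e20) => N1 h1; case: (cy _ e20) => N2 h2.
have := h1 (maxn N1 N2) (leq_maxl _ _); have := h2 (maxn N1 N2) (leq_maxr _ _).
have := hnorm_tri x (u (maxn N1 N2)) y; rewrite (hnormB x (u (maxn N1 N2))) => ha hb hc; lra.
Qed.

Lemma conv_op (H K : HilbertSpace R) (X : H -> K) (u : nat -> H) x :
  is_op X -> conv u x -> conv (fun n => X (u n)) (X x).
Proof.
move=> hX cx e e0; case: (op_bound hX) => M [M0 hM].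
case: (cx (e / M)); first by rewrite divr_gt0.
move=> N hN; exists N => n /hN h; rewrite -(opB hX).
apply: (le_lt_trans (hM _)); rewrite mulrC -ltr_pdivlMr //.
Qed.

Lemma conv_lin (H : HilbertSpace R) (u v : nat -> H) x y a :
  conv u x -> conv v y -> conv (fun n => a *: u n + v n) (a *: x + y).
Proof.
move=> cx cy e e0.
set k := Num.sqrt (complex.Re (a * a^*)).
have k0 : 0 <= k by exact: sqrtr_ge0.
have d0 : 0 < e / 2 / (k + 1) by rewrite !divr_gt0 // ltr_pwDr.
case: (cx _ d0) => N1 h1; case: (cy (e / 2)); first by rewrite divr_gt0.
move=> N2 h2; exists (maxn N1 N2) => n hn.
have hn1 := h1 n (leq_trans (leq_maxl _ _) hn).
have hn2 := h2 n (leq_trans (leq_maxr _ _) hn).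
have -> : a *: u n + v n - (a *: x + y) = a *: (u n - x) + (v n - y).
  by rewrite scalerBr; rewrite opprD !addrA; congr (_ + _); rewrite addrAC.
apply: (le_lt_trans (hnormD _ _)); rewrite hnormZ -/k.
have : k * hnorm (u n - x) <= (k + 1) * (e / 2 / (k + 1)).
  apply: ler_pM => //; first exact: hnorm_ge0; first by rewrite lerDl.
  exact: ltW.
rewrite [(k + 1) * _]mulrC divfK; last by rewrite gt_eqF // ltr_pwDr.
lra.
Qed.

Lemma complete (H : HilbertSpace R) (u : nat -> H) :
  (forall eps : R, 0 < eps -> exists N : nat, forall m n : nat,
      (N <= m)%N -> (N <= n)%N -> hnorm (u m - u n) < eps) ->
  exists x, conv u x.
Proof. exact: inner_complete. Qed.

End Ops.


Lemma sum_delta (C : comNzRingType) (s : seq nat) (a : nat -> C) j : uniq s ->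
  \sum_(i <- s) a i * (i == j)%:R = if j \in s then a j else 0.
Proof.
elim: s => [|x s IH]; first by rewrite big_nil.
rewrite big_cons /= => /andP[xs us]; rewrite IH // in_cons.
have [<-|xj] := eqVneq x j; last by rewrite mulr0 add0r.
by rewrite (negPf xs) mulr1 addr0.
Qed.

Section ON.
Variable R : realType.
Variable H : HilbertSpace R.
Variable f : nat -> H.
Hypothesis fon : forall i j, inner (f i) (f j) = (i == j)%:R.

Definition psum (a : nat -> R[i]) m n : H := \sum_(m <= i < n) a i *: f i.

Lemma ip_psum_f a m n j :
  inner (psum a m n) (f j) = if (m <= j < n)%N then a j else 0.
Proof.
rewrite /psum ip_suml.
under eq_bigr do rewrite ipZl fon.
by rewrite sum_delta ?iota_uniq // mem_index_iota.
Qed.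

Lemma ip_psum a b m n :
  inner (psum a m n) (psum b m n) = \sum_(m <= i < n) a i * (b i)^*.
Proof.
rewrite {1}/psum ip_suml; apply: eq_big_nat => i hi.
by rewrite ipZl inner_conj ip_psum_f hi.
Qed.

Definition w (c : R[i]) : R := complex.Re (c * c^*).

Lemma w_ge0 c : 0 <= w c.
Proof. case: c => p q; rewrite /w /=; nra. Qed.

Lemma nsq_psum a m n : nsq (psum a m n) = \sum_(m <= i < n) w (a i).
Proof. by rewrite /nsq ip_psum raddf_sum. Qed.

Definition coef (k : H) (i : nat) := inner k (f i).

Lemma ip_psum_l a m n k : inner (psum a m n) k = \sum_(m <= i < n) a i * (inner k (f i))^*.
Proof. by rewrite /psum ip_suml; apply: eq_bigr => i _; rewrite ipZl inner_conj. Qed.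

Lemma bessel_eq k n :
  nsq (k - psum (coef k) 0%N n) = nsq k - \sum_(0%N <= i < n) w (coef k i).
Proof.
rewrite /nsq ipBl !ipBr (inner_conj k (psum _ _ _)) ip_psum_l ip_psum !raddfB /= ReJ.
rewrite raddf_sum /w /coef; ring.
Qed.

Lemma bessel k n : \sum_(0%N <= i < n) w (coef k i) <= nsq k.
Proof. by have := nsq_ge0 (k - psum (coef k) 0%N n); rewrite bessel_eq subr_ge0. Qed.

End ON.


Lemma mono_le (R : realType) (A : nat -> R) : (forall n, A n <= A n.+1) ->
  forall m n, (m <= n)%N -> A m <= A n.
Proof.
move=> hA m n /subnK <-; elim: (n - m)%N => [|d IH]; first by rewrite add0n.
by apply: le_trans IH _; rewrite addSn.
Qed.

Lemma mono_cauchy (R : realType) (A : nat -> R) (B : R) :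
  (forall n, A n <= A n.+1) -> (forall n, A n <= B) ->
  forall eps, 0 < eps -> exists N, forall m n, (N <= m)%N -> (m <= n)%N -> A n - A m < eps.
Proof.
move=> hA hB eps e0.
pose E : set R := fun x => exists n, x = A n.
have hs : has_sup E.
  split; first by exists (A 0%N), 0%N.
  by exists B => x [n ->].
case: (sup_adherent e0 hs) => x [N ->] hN.
exists N => m n hm hmn.
have h1 : A n <= sup E by apply: sup_upper_bound => //; exists n.
have h2 := mono_le hA hm.
lra.
Qed.

Lemma sum_delta_v (C : pzRingType) (M : lmodType C) (s : seq nat) (G : nat -> M) j :
  uniq s -> \sum_(i <- s) (j == i)%:R *: G i = if j \in s then G j else 0.
Proof.
elim: s => [|x s IH]; first by rewrite big_nil.
rewrite big_cons /= => /andP[xs us]; rewrite IH // in_cons.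
have [->|xj] := eqVneq j x; last by rewrite scale0r add0r.
by rewrite (negPf xs) scale1r addr0.
Qed.

Section Model.
Variable R : realType.

Lemma hnorm1_ip (H : HilbertSpace R) (x : H) : hnorm x = 1 -> inner x x = 1.
Proof. by move=> h; rewrite ipxx -hnorm_sq h expr1n. Qed.

Lemma on_of (H : HilbertSpace R) (f : nat -> H) :
  (forall i, hnorm (f i) = 1) -> (forall i j, i <> j -> inner (f i) (f j) = 0) ->
  forall i j, inner (f i) (f j) = (i == j)%:R.
Proof.
move=> h1 h0 i j; have [->|ij] := eqVneq i j; first by rewrite hnorm1_ip.
by rewrite h0 //; apply/eqP.
Qed.

Lemma iter_iso_hnorm (H : HilbertSpace R) (V : H -> H) n x :
  Defs.isometry V -> hnorm (iter n V x) = hnorm x.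
Proof. by move=> hV; elim: n => //= n <-; rewrite hV.2. Qed.

Lemma conv_shift (H : HilbertSpace R) (u : nat -> H) x :
  conv u x -> conv (fun n => u n.+1) x.
Proof. by move=> c e /c [N hN]; exists N => n hn; apply: hN; apply: leqW. Qed.

Lemma conv_const (H : HilbertSpace R) (u : nat -> H) x N :
  (forall n, (N <= n)%N -> u n = x) -> conv u x.
Proof. by move=> h e e0; exists N => n /h ->; rewrite subrr hnorm0. Qed.

Variables (K L : HilbertSpace R) (V : K -> K) (u : K) (S : L -> L) (e : L).
Hypotheses (hV : Defs.isometry V) (hu : hnorm u = 1)
  (uperp : forall z, inner (V z) u = 0) (hS : Defs.isometry S) (he : hnorm e = 1)
  (eorth : forall m n, m <> n -> inner (iter m S e) (iter n S e) = 0).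

Definition f i := iter i V u.
Definition g i := iter i S e.

Lemma gon i j : inner (g i) (g j) = (i == j)%:R.
Proof.
apply: on_of => [k|m n mn]; first by rewrite /g iter_iso_hnorm.
exact: eorth.
Qed.

Lemma f_shift d i : inner (f (d.+1 + i)) (f i) = 0.
Proof.
elim: i => [|i IH]; first by rewrite addn0 /f iterS uperp.
by rewrite addnS /f !iterS iso_ip.
Qed.

Lemma fon i j : inner (f i) (f j) = (i == j)%:R.
Proof.
apply: on_of; first by move=> k; rewrite /f iter_iso_hnorm.
move=> {}i {}j ij; have [lt|gt] := ltnP j i.
  by rewrite -(subnK lt) -addSnnS f_shift.
have lt : (i < j)%N by rewrite ltn_neqAle gt andbT; apply/eqP.
by rewrite inner_conj -(subnK lt) -addSnnS f_shift conjc0.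
Qed.

Definition P (k : K) N : L := psum g (coef f k) 0%N N.

Lemma P_diff k m n : (m <= n)%N -> P k n - P k m = psum g (coef f k) m n.
Proof.
move=> mn; rewrite /P /psum (big_cat_nat (leq0n m) mn) /=.
by rewrite addrAC subrr add0r.
Qed.

Lemma P_cauchy k : forall eps : R, 0 < eps -> exists N : nat, forall m n : nat,
      (N <= m)%N -> (N <= n)%N -> hnorm (P k m - P k n) < eps.
Proof.
move=> eps e0.
pose A n := \sum_(0%N <= i < n) w (coef f k i).
have hA : forall n, A n <= A n.+1.
  by move=> n; rewrite /A big_nat_recr //= lerDl w_ge0.
have hB : forall n, A n <= nsq k.
  move=> n; rewrite /A; exact: (@bessel R K f fon k n).
have e2 : 0 < eps ^+ 2 by rewrite exprn_gt0.
case: (mono_cauchy hA hB e2) => N hN; exists N.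
suff key : forall m n, (N <= m)%N -> (m <= n)%N -> hnorm (P k n - P k m) < eps.
  move=> m n hm hn; have [mn|nm] := leqP m n; first by rewrite hnormB key.
  by apply: key => //; apply: ltnW.
move=> m n hm mn; apply: hnorm_lt; first exact: ltW.
rewrite P_diff // nsq_psum; last exact: gon.
have := hN m n hm mn; rewrite /A (big_cat_nat (leq0n m) mn) /=.
by rewrite addrAC subrr add0r.
Qed.

Definition Y (k : K) : L :=
  proj1_sig (constructive_indefinite_description _ (complete (P_cauchy k))).

Lemma YP k : conv (P k) (Y k).
Proof. exact: (proj2_sig (constructive_indefinite_description _ _)). Qed.

Lemma coefD a x y i : coef f (a *: x + y) i = a * coef f x i + coef f y i.
Proof. by rewrite /coef ipDl ipZl. Qed.

Lemma P_lin a x y N : P (a *: x + y) N = a *: P x N + P y N.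
Proof.
rewrite /P /psum scaler_sumr -big_split /=; apply: eq_bigr => i _.
by rewrite coefD scalerDl scalerA.
Qed.

Lemma Y_lin a x y : Y (a *: x + y) = a *: Y x + Y y.
Proof.
apply: (conv_unique (YP _)).
have -> : P (a *: x + y) = fun N => a *: P x N + P y N.
  by apply: functional_extensionality => N; rewrite P_lin.
exact: conv_lin (YP x) (YP y).
Qed.

Lemma P_bound k N : hnorm (P k N) <= hnorm k.
Proof.
apply: hnorm_le; first exact: hnorm_ge0.
by rewrite hnorm_sq /P nsq_psum; [exact: (@bessel R K f fon k N) | exact: gon].
Qed.

Lemma Y_bound k : hnorm (Y k) <= hnorm k.
Proof.
apply: le_eps => eps e0; case: (YP k e0) => N /(_ N (leqnn N)) h.
have := hnormD (Y k - P k N) (P k N); rewrite subrK (hnormB (Y k)).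
have := P_bound k N; lra.
Qed.

Lemma Y_op : is_op Y.
Proof.
split; first by move=> a x y; exact: Y_lin.
by exists 1 => x; rewrite mul1r; exact: Y_bound.
Qed.

Lemma P_V k N : P (V k) N.+1 = S (P k N).
Proof.
rewrite /P /psum big_nat_recl //.
have -> : coef f (V k) 0 = 0 by rewrite /coef uperp.
rewrite scale0r add0r (op_sum hS.1); apply: eq_bigr => i _.
by rewrite (opZ hS.1) /coef /f iterS iso_ip.
Qed.

Lemma Y_inter : intertwines Y V S.
Proof.
move=> k; apply: (conv_unique (conv_shift (YP (V k)))).
have -> : (fun N => P (V k) N.+1) = fun N => S (P k N).
  by apply: functional_extensionality => N; rewrite P_V.
exact: conv_op hS.1 (YP k).
Qed.

Lemma Y_f m : Y (f m) = g m.
Proof.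
apply: (conv_unique (YP _)); apply: (conv_const (N := m.+1)) => N hN.
rewrite /P /psum; under eq_bigr do rewrite /coef fon.
by rewrite sum_delta_v ?iota_uniq // mem_index_iota hN.
Qed.

Hypothesis hdense : forall (y : L) (eps : R), 0 < eps -> exists (n : nat) (c : 'I_n -> R[i]),
        hnorm ((\sum_(i < n) c i *: iter i S e) - y) < eps.

Lemma Y_dense : dense_range Y.
Proof.
move=> y eps e0; case: (hdense y e0) => n [c h].
exists (\sum_(i < n) c i *: f i); rewrite (op_sum Y_op).
by under eq_bigr do rewrite (opZ Y_op) Y_f.
Qed.

End Model.


Lemma inv_small (R : realType) (d : R) : 0 < d ->
  exists N, forall n, (N <= n)%N -> n.+1%:R^-1 < d.
Proof.
move=> d0; case: (ltr_add_invr d0) => k; rewrite add0r => hk.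
exists k => n hn; apply: le_lt_trans hk.
by rewrite lef_pV2 ?posrE ?ltr0Sn // ler_nat.
Qed.

Lemma inv_pos (R : realType) n : 0 < n.+1%:R^-1 :> R.
Proof. by rewrite invr_gt0 ltr0Sn. Qed.

Section Proj.
Variable R : realType.
Variables (K : HilbertSpace R) (V : K -> K) (y0 : K).
Hypotheses (hV : Defs.isometry V) (ny : forall x, V x <> y0).

Lemma hnorm_eq1 (x : K) : nsq x = 1 -> hnorm x = 1.
Proof. by move=> h; rewrite /hnorm -/(nsq x) h sqrtr1. Qed.

Definition E : set R := fun r => exists x, r = - hnorm (y0 - V x).

Lemma hsE : has_sup E.
Proof.
split; first by exists (- hnorm (y0 - V 0)), 0.
by exists 0 => r [x ->]; rewrite oppr_le0 hnorm_ge0.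
Qed.

Definition d : R := - sup E.

Lemma d_le x : d <= hnorm (y0 - V x).
Proof.
have := sup_upper_bound hsE (ex_intro _ x erefl); rewrite /d; lra.
Qed.

Lemma d_approx eps : 0 < eps -> exists x, hnorm (y0 - V x) < d + eps.
Proof.
move=> e0; case: (sup_adherent e0 hsE) => r [x ->] h; exists x; rewrite /d; lra.
Qed.

Lemma d_ge0 : 0 <= d.
Proof.
have : sup E <= 0.
  apply: ge_sup; first by exists (- hnorm (y0 - V 0)), 0.
  by move=> r [x ->]; rewrite oppr_le0 hnorm_ge0.
rewrite /d; lra.
Qed.

Definition xs (n : nat) : K :=
  proj1_sig (constructive_indefinite_description _ (d_approx (inv_pos R n))).

Lemma xsP n : hnorm (y0 - V (xs n)) < d + n.+1%:R^-1.
Proof. by rewrite /xs; case: constructive_indefinite_description. Qed.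

Lemma par_law (x y : K) : nsq (x - y) + nsq (x + y) = 2 * nsq x + 2 * nsq y.
Proof. rewrite nsqB nsqD; ring. Qed.

Lemma mid_eq (a b : K) :
  (y0 - V a) + (y0 - V b) = (2:R)%:C *: (y0 - V ((2^-1 : R)%:C *: (a + b))).
Proof.
rewrite (opZ hV.1) (opD hV.1) scalerBr scalerA -rmorphM /= divff ?pnatr_eq0 //.
rewrite scale1r.
have -> : (2:R)%:C = 1 + 1 by apply: complex_ext => /=; ring.
rewrite scalerDl scale1r; rewrite opprD; rewrite !addrA; congr (_ + _).
by rewrite addrAC.
Qed.

Lemma sq_bound (A dm dl : R) : 0 <= A -> A < d + dm -> 0 < dm -> dm <= 1 -> dm < dl ->
  A ^+ 2 < d ^+ 2 + 2 * d * dl + dl.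
Proof.
move=> A0 hA dm0 dm1 dml; have d0 := d_ge0.
have h1 : A ^+ 2 < (d + dm) ^+ 2 by nra.
have h2 : dm ^+ 2 <= dm by nra.
have h3 : d * dm <= d * dl by nra.
nra.
Qed.

Lemma inv_le1 n : n.+1%:R^-1 <= 1 :> R.
Proof. by rewrite invf_le1 ?ltr0Sn // ler1n. Qed.

Lemma xs_cauchy : forall eps : R, 0 < eps -> exists N : nat, forall m n : nat,
      (N <= m)%N -> (N <= n)%N -> hnorm (xs m - xs n) < eps.
Proof.
move=> eps e0; have d0 := d_ge0.
pose dl := eps ^+ 2 / (8 * d + 4).
have dl0 : 0 < dl by rewrite divr_gt0 ?exprn_gt0 //; lra.
have dle : dl * (8 * d + 4) = eps ^+ 2 by rewrite /dl divfK //; lra.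
case: (inv_small dl0) => N hN; exists N => m n hm hn.
set a := y0 - V (xs m); set b := y0 - V (xs n).
set z := y0 - V ((2^-1 : R)%:C *: (xs m + xs n)).
have ha := sq_bound (hnorm_ge0 a) (xsP m) (inv_pos R m) (inv_le1 m) (hN m hm).
have hb := sq_bound (hnorm_ge0 b) (xsP n) (inv_pos R n) (inv_le1 n) (hN n hn).
have hz : d ^+ 2 <= nsq z by rewrite -hnorm_sq; have := d_le ((2^-1 : R)%:C *: (xs m + xs n)); nra.
have pl := par_law a b; rewrite [a + b]mid_eq nsqZr -!hnorm_sq in pl.
have -> : hnorm (xs m - xs n) = hnorm (a - b).
  rewrite -hV.2 (opB hV.1) hnormB /a /b; congr hnorm.
  by rewrite opprB [RHS]addrC addrA subrK.
apply: hnorm_lt; first exact: ltW.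
rewrite -hnorm_sq in hz; rewrite -hnorm_sq; nra.
Qed.

Lemma proj_exists : exists x, forall z, hnorm (y0 - V x) <= hnorm (y0 - V x - V z).
Proof.
case: (complete xs_cauchy) => x hx; exists x => z.
have hw : hnorm (y0 - V x) <= d.
  apply: le_eps => eps e0.
  have e20 : 0 < eps / 2 by rewrite divr_gt0.
  case: (hx _ e20) => N1 h1; case: (inv_small e20) => N2 h2.
  move: (maxn N1 N2) (leq_maxl N1 N2) (leq_maxr N1 N2) => n l1 l2.
  have hn1 := h1 n l1; have hn2 := h2 n l2.
  have := xsP n.
  have := hnorm_tri y0 (V (xs n)) (V x).
  rewrite -(opB hV.1) hV.2.
  move: (n.+1%:R^-1 : R) hn2 => i hi ? ?; lra.
have := d_le (x + z); rewrite (opD hV.1) opprD addrA; lra.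
Qed.

Lemma perp_of_min w : (forall z, hnorm w <= hnorm (w - V z)) ->
  forall z, inner (V z) w = 0.
Proof.
move=> hmin z.
have nv := nsq_ge0 (V z).
pose s : R := (nsq (V z) + 1)^-1.
have sp : 0 < s by rewrite invr_gt0; lra.
have s1 : s * (nsq (V z) + 1) = 1 by rewrite mulVf //; lra.
clearbody s.
have := hmin ((s%:C * (inner (V z) w)^*) *: z); rewrite (opZ hV.1) => hm.
have hm2 : nsq w <= nsq (w - (s%:C * (inner (V z) w)^*) *: V z).
  by rewrite -!hnorm_sq; have := hnorm_ge0 w; nra.
rewrite nsqB nsqZ ipZr (inner_conj w (V z)) in hm2.
clear hm hmin; move: hm2 sp s1 nv; move: (nsq (V z)) (nsq w) s (inner (V z) w) => N W s' [p q] /=.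
move=> hm2 sp s1 nv.
have hpq : p ^+ 2 + q ^+ 2 = 0.
  have key : 0 <= s' * (p ^+ 2 + q ^+ 2) * (s' * N - 2) by nra.
  have neg : s' * N - 2 < 0 by nra.
  have : 0 <= p ^+ 2 + q ^+ 2 by nra.
  move=> X0; have m0 : s' * (s' * N - 2) < 0 by nra.
  apply/eqP; rewrite eq_le X0 andbT; nra.
apply: complex_ext => /=; nra.
Qed.

Lemma perp_exists : exists u : K, hnorm u = 1 /\ forall z, inner (V z) u = 0.
Proof.
case: proj_exists => x hmin.
have wn0 : y0 - V x != 0.
  by apply/negP; rewrite subr_eq0 => /eqP h; exact: ny x (esym h).
have hmin' : forall z, hnorm (y0 - V x) <= hnorm ((y0 - V x) - V z) by [].
move: (y0 - V x) wn0 hmin' => w0 wn0 hmin'.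
have perp := perp_of_min hmin'.
have wp : 0 < hnorm w0.
  rewrite lt0r hnorm_ge0 andbT; apply/negP => /eqP /hnorm_eq0 h.
  by rewrite h eqxx in wn0.
exists ((hnorm w0)^-1%:C *: w0); split.
  apply: hnorm_eq1; rewrite nsqZr -hnorm_sq.
  by rewrite -exprMn mulVf ?expr1n // gt_eqF.
by move=> z; rewrite ipZr perp mulr0.
Qed.

End Proj.


Section Final.
Variable R : realType.

Lemma compose_dprec (H K L : HilbertSpace R) (T : H -> H) (X : H -> K) (V : K -> K)
  (S : L -> L) (Y : K -> L) :
  is_op X -> dense_range X -> intertwines X T V ->
  is_op Y -> dense_range Y -> intertwines Y V S -> dprec T S.
Proof.
move=> hX dX iX hY dY iY; exists (fun h => Y (X h)); split; last split.
- split; first by move=> a x y; rewrite (opD hX) (opZ hX) (opD hY) (opZ hY).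
  case: (op_bound hX) => M1 [M10 h1]; case: (op_bound hY) => M2 [M20 h2].
  exists (M2 * M1) => x; apply: (le_trans (h2 _)); rewrite -mulrA.
  by apply: ler_wpM2l; [exact: ltW | exact: h1].
- move=> y eps e0; case: (op_bound hY) => M [M0 hM].
  have e20 : 0 < eps / 2 by rewrite divr_gt0.
  case: (dY y _ e20) => k hk.
  case: (dX k (eps / 2 / M)); first by rewrite divr_gt0.
  move=> x hx; exists x.
  have := hnorm_tri (Y (X x)) (Y k) y; rewrite -(opB hY).
  have := hM (X x - k).
  have : M * hnorm (X x - k) < eps / 2 by rewrite mulrC -ltr_pdivlMr.
  move: (hnorm (Y (X x) - y)) (hnorm (Y (X x - k))) (M * hnorm (X x - k)) hk => a b c hk.
  lra.
- by move=> x; rewrite iX iY.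
Qed.

Lemma shift_far (L : HilbertSpace R) (S : L -> L) :
  simple_unilateral_shift S ->
  exists e : L, forall w, ~ (hnorm (S w - e) < 2^-1).
Proof.
case=> hS [e [he [eorth hd]]]; exists e => w hw.
have h2 : 0 < (2^-1 : R) by rewrite invr_gt0.
case: (hd w _ h2) => n [c hc].
set p := \sum_(i < n) c i *: iter i S e in hc.
have ip0 : inner (S p) e = 0.
  rewrite /p (op_sum hS.1) ip_suml big1 // => i _.
  by rewrite (opZ hS.1) ipZl (eorth i.+1 0%N) ?mulr0.
have h1 : 1 <= hnorm (S p - e).
  apply: sq_le; first exact: hnorm_ge0.
  rewrite expr1n hnorm_sq nsqB ip0 /= -(hnorm_sq e) he.
  have := nsq_ge0 (S p); lra.
have := hnorm_tri (S p) (S w) e; rewrite -(opB hS.1) hS.2.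
move: (hnorm (S p - e)) (hnorm (p - w)) (hnorm (S w - e)) h1 hc hw => a b c' ha hb hc'.
lra.
Qed.

End Final.

Theorem lemma2p1 (R : realType) (H K L : HilbertSpace R) (T : H -> H)
    (X : H -> K) (V : K -> K) (S : L -> L) :
  power_bounded T ->
  isometric_asymptote T X V ->
  simple_unilateral_shift S ->
  (dprec T S <-> ~ unitary V).
Proof.
move=> _ [hV [hX [dX [iX univ]]]] hSh; split.
- case=> Y [hY [dY iY]] [_ surj].
  have hS := hSh.1.
  case: (univ L S Y hS hY iY) => Z [hZ [iZ fac]].
  case: (shift_far hSh) => e far.
  have h2 : 0 < (2^-1 : R) by rewrite invr_gt0.
  case: (dY e _ h2) => x hx.
  case: (surj (X x)) => k hk.
  by apply: (far (Z k)); rewrite -iZ hk -fac.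
- move=> nu.
  have [y0 ny] : exists y0, forall x, V x <> y0.
    apply: NNPP => hn; apply: nu; split => // y.
    by apply: NNPP => hy; apply: hn; exists y => x hx; apply: hy; exists x.
  case: (perp_exists hV ny) => u [hu uperp].
  case: hSh => hS [e [he [eorth hd]]].
  exact: compose_dprec hX dX iX (Y_op hV hu uperp hS he eorth)
    (Y_dense hV hu uperp hS he eorth hd) (Y_inter hV hu uperp hS he eorth).
Qed.
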